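(* Let $H$ be a separable infinite-dimensional Hilbert space and let $\Phi:\mathcal{T}(H)\to\mathcal{T}(H)$ be the channel $\Phi(X)=\sum_{k=1}^\infty u_kv_k^*Xv_ku_k^*=\sum_{k=1}^\infty E_kXE_k^*$, where $E_k=u_kv_k^*$, $u_k,v_k\in H$, $\|u_k\|=1$ for all $k$, and $\sum_{k=1}^\infty v_kv_k^*=I_H$. Let $\Phi^*:B(H)\to B(H)$ be its dual map. Then an orthogonal projection $P\in B(H)$ satisfies $\Phi^*(P)=P$ if and only if $PE_k=E_kP$ for all $k$. In this case, all vectors $u_k$ and $v_k$ are eigenvectors of $P$. Moreover, any two orthogonal projections fixed by $\Phi^*$ commute.
   Context: $B(H)$ denotes bounded operators and $\mathcal{T}(H)$ the trace-class operators on $H$. The dual map $\Phi^*$ satisfies $\operatorname{Tr}(\Phi(X)Y)=\operatorname{Tr}(X\Phi^*(Y))$ for $X\in\mathcal{T}(H)$, $Y\in B(H)$; here $\Phi^*(Y)=\sum_k E_k^*YE_k$. (Such $\Phi$ are exactly the strongly entanglement breaking channels on $\mathcal{T}(H)$.) *)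

(* Defs.v *)
From HB Require Import structures.
From mathcomp Require Import all_boot all_order all_algebra.
From mathcomp Require Import reals.
From mathcomp.real_closed Require Import complex.
Set Implicit Arguments. Unset Strict Implicit. Unset Printing Implicit Defensive.
Import Order.TTheory GRing.Theory Num.Theory.
Local Open Scope ring_scope.

Section Hilbert.
Variables (R : realType) (V : lmodType R[i]) (ip : V -> V -> R[i]).
(* ip is linear in the first argument, conjugate-linear in the second. *)

Definition ipnorm (x : V) : R := Num.sqrt (complex.Re (ip x x)).

Definition vconverges (s : nat -> V) (x : V) : Prop :=
  forall e : R, 0 < e -> exists N : nat, forall n : nat, (N <= n)%N -> ipnorm (s n - x) < e.

Definition vcauchy (s : nat -> V) : Prop :=
  forall e : R, 0 < e -> exists N : nat, forall m n : nat, (N <= m)%N -> (N <= n)%N ->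
    ipnorm (s m - s n) < e.

Record separable_inf_hilbert : Prop := {
  ip_linear : forall (a : R[i]) (x y z : V), ip (a *: x + y) z = a * ip x z + ip y z;
  ip_conj_sym : forall x y : V, ip y x = Num.conj (ip x y);
  ip_pos : forall x : V, 0 <= ip x x;
  ip_definite : forall x : V, ip x x = 0 -> x = 0;
  hilbert_complete : forall s : nat -> V, vcauchy s -> exists x, vconverges s x;
  hilbert_separable : exists d : nat -> V,
    forall (x : V) (e : R), 0 < e -> exists n, ipnorm (x - d n) < e;
  hilbert_inf_dim : forall n : nat, exists w : 'I_n -> V,
    forall c : 'I_n -> R[i], \sum_(i < n) c i *: w i = 0 -> forall i, c i = 0 }.

Definition bounded_op (T : V -> V) : Prop :=
  (forall (a : R[i]) (x y : V), T (a *: x + y) = a *: T x + T y) /\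
  exists M : R, forall x : V, ipnorm (T x) <= M * ipnorm x.

Definition orth_proj (P : V -> V) : Prop :=
  bounded_op P /\ (forall x, P (P x) = P x) /\ (forall x y, ip (P x) y = ip x (P y)).

(** rank-one operator u v^* : x |-> <x, v> u ; its adjoint is v u^* *)
Definition rank1 (u v : V) : V -> V := fun x => ip x v *: u.

(** Phi^*(Y) = sum_k E_k^* Y E_k with E_k = u_k v_k^*, E_k^* = v_k u_k^*,
    the series being the (strong) limit of its partial sums *)
Definition dual_channel (u v : nat -> V) (Y : V -> V) (x : V) (y : V) : Prop :=
  vconverges (fun n => \sum_(k < n) rank1 (v k) (u k) (Y (rank1 (u k) (v k) x))) y.

Definition dual_fixed (u v : nat -> V) (P : V -> V) : Prop :=
  forall x, dual_channel u v P x (P x).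

Definition resolves_identity (v : nat -> V) : Prop :=
  forall x, vconverges (fun n => \sum_(k < n) rank1 (v k) (v k) x) x.

Definition eigvec (T : V -> V) (x : V) : Prop := x != 0 /\ exists l : R[i], T x = l *: x.

End Hilbert.

(* Main.v *)
Require Import Defs.
From HB Require Import structures.
From mathcomp Require Import all_boot all_order all_algebra.
From mathcomp Require Import reals.
From mathcomp.real_closed Require Import complex.
From mathcomp Require Import ring lra.
Import Order.TTheory GRing.Theory Num.Theory.
Local Open Scope ring_scope.
Set Implicit Arguments. Unset Strict Implicit.

Section Basics.
Variables (R : realType) (V : lmodType R[i]) (ip : V -> V -> R[i]).
Hypothesis hH : separable_inf_hilbert ip.

Lemma ipDl x y z : ip (x + y) z = ip x z + ip y z.
Proof. by have := ip_linear hH 1 x y z; rewrite scale1r mul1r. Qed.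

Lemma ip0l z : ip 0 z = 0.
Proof. by apply: (addrI (ip 0 z)); rewrite -ipDl !addr0. Qed.

Lemma ipZl a x z : ip (a *: x) z = a * ip x z.
Proof. by have := ip_linear hH a x 0 z; rewrite !addr0 ip0l addr0. Qed.

Lemma ipNl x z : ip (- x) z = - ip x z.
Proof. by rewrite -scaleN1r ipZl mulN1r. Qed.

Lemma ipBl x y z : ip (x - y) z = ip x z - ip y z.
Proof. by rewrite ipDl ipNl. Qed.

Lemma ip_suml n (f : 'I_n -> V) z :
  ip (\sum_(j < n) f j) z = \sum_(j < n) ip (f j) z.
Proof.
elim: n f => [|n IH] f; first by rewrite !big_ord0 ip0l.
by rewrite !big_ord_recr /= ipDl IH.
Qed.

Lemma ipC x y : ip y x = (ip x y)^*.
Proof. exact: ip_conj_sym hH x y. Qed.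

Lemma ip0r z : ip z 0 = 0.
Proof. by rewrite ipC ip0l conjC0. Qed.

Lemma ipZr a x z : ip z (a *: x) = a^* * ip z x.
Proof. by rewrite ipC ipZl rmorphM /= -ipC. Qed.

Lemma ipBr x y z : ip z (x - y) = ip z x - ip z y.
Proof. by rewrite ipC ipBl rmorphB /= -!ipC. Qed.

Lemma ip_ge0 x : 0 <= ip x x.
Proof. exact: ip_pos hH x. Qed.

Lemma ip_eq0 x : ip x x = 0 -> x = 0.
Proof. exact: ip_definite hH x. Qed.

Lemma ip_realJ x : (ip x x)^* = ip x x.
Proof. by rewrite -ipC. Qed.

Lemma CS w z : ip w z * (ip w z)^* <= ip w w * ip z z.
Proof.
have [z0|zn0] := eqVneq (ip z z) 0.
  by rewrite (ip_eq0 z0) ip0r mul0r ip0l mulr0.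
have dpos : 0 < ip z z by rewrite lt_def zn0 /=; apply: ip_ge0.
set c := ip w z; set d := ip z z.
set a := c / d.
have h := ip_ge0 (w - a *: z).
have E : ip (w - a *: z) (w - a *: z) = ip w w - c * c^* / d.
  rewrite !ipBl !ipBr !ipZl !ipZr -/c -/d.
  rewrite [ip z w]ipC -/c /a rmorphM fmorphV /= ip_realJ -/d.
  by field; rewrite lt0r_neq0.
move: h; rewrite E subr_ge0 ler_pdivrMr //.
Qed.

Definition cconv (a : nat -> R[i]) (l : R[i]) :=
  forall e : R[i], 0 < e -> exists N, forall n, (N <= n)%N -> `|a n - l| < e.

Lemma cconv_ext a b l : (forall n, a n = b n) -> cconv a l -> cconv b l.
Proof. by move=> h c e he; case: (c e he) => N hN; exists N => n hn; rewrite -h; exact: hN. Qed.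

Lemma vconv_ext (s t : nat -> V) y : (forall n, s n = t n) ->
  vconverges ip s y -> vconverges ip t y.
Proof. by move=> h c e he; case: (c e he) => N hN; exists N => n hn; rewrite -h; exact: hN. Qed.

Lemma cconvB a b l m : cconv a l -> cconv b m ->
  cconv (fun n => a n - b n) (l - m).
Proof.
move=> ca cb e he.
have he2 : 0 < e / 2 by rewrite divr_gt0 ?ltr0n.
case: (ca _ he2) => N1 h1; case: (cb _ he2) => N2 h2.
exists (maxn N1 N2) => n hn.
have hn1 : (N1 <= n)%N by apply: leq_trans hn; apply: leq_maxl.
have hn2 : (N2 <= n)%N by apply: leq_trans hn; apply: leq_maxr.
have -> : a n - b n - (l - m) = (a n - l) - (b n - m) by ring.
apply: (le_lt_trans (ler_normB _ _)).
have -> : e = e / 2 + e / 2 by field.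
exact: ltrD (h1 _ hn1) (h2 _ hn2).
Qed.

Lemma cconv_uniq a l m : cconv a l -> cconv a m -> l = m.
Proof.
move=> cl cm; apply/eqP; rewrite -subr_eq0; apply/negPn/negP => hne.
have hp : 0 < `|l - m| / 2 by rewrite divr_gt0 ?ltr0n ?normr_gt0.
case: (cl _ hp) => N1 h1; case: (cm _ hp) => N2 h2.
have hn1 : (N1 <= maxn N1 N2)%N by apply: leq_maxl.
have hn2 : (N2 <= maxn N1 N2)%N by apply: leq_maxr.
have := ltrD (h1 _ hn1) (h2 _ hn2).
have -> : l - m = (a (maxn N1 N2) - m) - (a (maxn N1 N2) - l) by ring.
set x := a (maxn N1 N2) - m; set y := a (maxn N1 N2) - l.
move=> H.
have : `|x - y| < `|x - y| by apply: (le_lt_trans (ler_normB _ _)); rewrite addrC; move: H;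
  have -> : `|x - y| / 2 + `|x - y| / 2 = `|x - y| by field.
by rewrite ltxx.
Qed.

Lemma cont (s : nat -> V) y z : vconverges ip s y ->
  cconv (fun n => ip (s n) z) (ip y z).
Proof.
move=> hs e he.
set d := ip z z.
have d0 : 0 <= d by exact: ip_ge0.
have d1 : 0 < d + 1 by rewrite ltr_wpDl.
set t := e ^+ 2 / (d + 1).
have tpos : 0 < t by rewrite divr_gt0 // exprn_gt0.
have Ret : 0 < complex.Re t.
  by move: tpos; rewrite ltcE => /andP[_].
have epos : 0 < Num.sqrt (complex.Re t) by rewrite sqrtr_gt0.
case: (hs _ epos) => N hN; exists N => n hn.
rewrite -ipBl; set w := s n - y.
have hw := hN n hn; rewrite -/w /ipnorm ltr_sqrt // in hw.
have wt : ip w w < t.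
  by rewrite ltcE hw andbT (ger0_Im (ltW tpos)) (ger0_Im (ip_ge0 w)).
have : `|ip w z| ^+ 2 < e ^+ 2.
  rewrite normCK; apply: (le_lt_trans (CS w z)).
  apply: (le_lt_trans (y := t * d)); first by rewrite ler_wpM2r // ltW.
  rewrite /t mulrAC ltr_pdivrMr // ltr_pM2l ?exprn_gt0 //.
  by rewrite ltrDl ltr01.
rewrite ltr_pXn2r // ?nnegrE ?normr_ge0 // ltW //.
Qed.

Lemma sum_lim (a : nat -> R[i]) : (forall j, 0 <= a j) ->
  cconv (fun n => \sum_(j < n) a j) 0 -> forall k, a k = 0.
Proof.
move=> a0 ca k; apply/eqP/negPn/negP => hk.
have hp : 0 < a k by rewrite lt_def hk a0.
case: (ca _ hp) => N hN.
have := hN (maxn N k.+1) (leq_maxl _ _).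
rewrite subr0 ger0_norm ?sumr_ge0 // -(big_mkord (fun _ => true) a).
rewrite (big_cat_nat _ (n := k.+1)) //= ?leq_maxr // big_nat_recr //=.
set S1 := \sum_(0 <= i < k) a i; set S2 := \sum_(k.+1 <= i < maxn N k.+1) a i.
have h1 : 0 <= S1 by apply: sumr_ge0.
have h2 : 0 <= S2 by apply: sumr_ge0.
have Hle : a k <= S1 + a k + S2.
  have h3 : 0 <= S1 + S2 by apply: addr_ge0.
  by rewrite addrAC -subr_ge0 addrK.
move=> H; have := le_lt_trans Hle H.
by rewrite lt_def eqxx.
Qed.

End Basics.

Section Main.
Variables (R : realType) (V : lmodType R[i]) (ip : V -> V -> R[i]).
Hypothesis hH : separable_inf_hilbert ip.
Variables (u v : nat -> V).
Hypothesis hu : forall k, ipnorm ip (u k) = 1.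
Hypothesis hv : resolves_identity ip v.

Lemma uu1 k : ip (u k) (u k) = 1.
Proof.
have h0 := ip_ge0 hH (u k).
have := hu k; rewrite /ipnorm => h.
have hre : 0 <= complex.Re (ip (u k) (u k)) by move: h0; rewrite lecE => /andP[].
rewrite -(RRe_real (ger0_real h0)).
by rewrite -(sqr_sqrtr hre) h expr1n.
Qed.

Lemma weak_gen (f : nat -> R[i]) y :
  vconverges ip (fun n => \sum_(j < n) f j *: v j) y -> forall w,
  cconv (fun n => \sum_(j < n) f j * ip (v j) w) (ip y w).
Proof.
move=> h w; apply: cconv_ext (cont hH w h) => n.
by rewrite ip_suml //; apply: eq_bigr => j _; rewrite ipZl.
Qed.

Lemma hv_weak x w :
  cconv (fun n => \sum_(j < n) ip x (v j) * ip (v j) w) (ip x w).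
Proof. exact: (weak_gen (f := fun j => ip x (v j)) (hv x) w). Qed.

Section Proj.
Variable P : V -> V.
Hypothesis hP : orth_proj ip P.

Lemma Plin a x y : P (a *: x + y) = a *: P x + P y.
Proof. by case: hP => [[h _] _]; apply: h. Qed.
Lemma Pid x : P (P x) = P x.
Proof. by case: hP => [_ [h _]]; apply: h. Qed.
Lemma Psa x y : ip (P x) y = ip x (P y).
Proof. by case: hP => [_ [_ h]]; apply: h. Qed.
Lemma PD x y : P (x + y) = P x + P y.
Proof. by have := Plin 1 x y; rewrite !scale1r. Qed.
Lemma P0 : P 0 = 0.
Proof. by apply: (addrI (P 0)); rewrite -PD !addr0. Qed.
Lemma PZ a x : P (a *: x) = a *: P x.
Proof. by have := Plin a x 0; rewrite !addr0 P0 addr0. Qed.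
Lemma PB x y : P (x - y) = P x - P y.
Proof. by rewrite PD -scaleN1r PZ scaleN1r. Qed.

Definition pP j := ip (P (u j)) (u j).

Lemma pP_sq j : pP j = ip (P (u j)) (P (u j)).
Proof. by rewrite /pP -{1}Pid Psa. Qed.

Lemma pP_ge0 j : 0 <= pP j.
Proof. by rewrite pP_sq; apply: ip_ge0. Qed.

Lemma pP_compl j : ip (u j - P (u j)) (u j - P (u j)) = 1 - pP j.
Proof.
rewrite !(ipBl hH) !(ipBr hH) uu1 -Psa -/(pP j) -pP_sq.
ring.
Qed.

Lemma pP_le1 j : 0 <= 1 - pP j.
Proof. by rewrite -pP_compl; apply: ip_ge0. Qed.

Hypothesis hf : dual_fixed ip u v P.

Lemma fixed_weak x w :
  cconv (fun n => \sum_(j < n) (ip x (v j) * pP j) * ip (v j) w) (ip (P x) w).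
Proof.
apply: (weak_gen (f := fun j => ip x (v j) * pP j)); apply: vconv_ext (hf x) => n.
apply: eq_bigr => j _; rewrite /rank1 PZ ipZl //.
Qed.

Lemma ran_fact k : pP k != 1 -> forall x, P x = x -> ip x (v k) = 0.
Proof.
move=> hk x hx.
have L1 := fixed_weak x x; rewrite hx in L1.
have L := cconvB (hv_weak x x) L1; rewrite subrr in L.
have L' : cconv (fun n => \sum_(j < n) ((1 - pP j) * (ip x (v j) * (ip x (v j))^*))) 0.
  apply: cconv_ext L => n; rewrite -sumrB; apply: eq_bigr => j _.
  rewrite [ip (v j) x](ipC hH); ring.
have nn : forall j, 0 <= (1 - pP j) * (ip x (v j) * (ip x (v j))^*).
  by move=> j; apply: mulr_ge0; [apply: pP_le1 | apply: mul_conjC_ge0].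
have := sum_lim nn L' k.
move/eqP; rewrite mulf_eq0 subr_eq0 eq_sym (negbTE hk) /= mulf_eq0 conjC_eq0 orbb.
by move/eqP.
Qed.

Lemma ker_fact k : pP k != 0 -> forall x, P x = 0 -> ip x (v k) = 0.
Proof.
move=> hk x hx.
have L1 := fixed_weak x x; rewrite hx (ip0l hH) in L1.
have L' : cconv (fun n => \sum_(j < n) (pP j * (ip x (v j) * (ip x (v j))^*))) 0.
  apply: cconv_ext L1 => n; apply: eq_bigr => j _.
  rewrite [ip (v j) x](ipC hH); ring.
have nn : forall j, 0 <= pP j * (ip x (v j) * (ip x (v j))^*).
  by move=> j; apply: mulr_ge0; [apply: pP_ge0 | apply: mul_conjC_ge0].
have := sum_lim nn L' k.
move/eqP; rewrite mulf_eq0 (negbTE hk) /= mulf_eq0 conjC_eq0 orbb.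
by move/eqP.
Qed.

Lemma factA k : pP k != 1 -> P (v k) = 0.
Proof.
move=> hk; have h := ran_fact hk (Pid (v k)).
by apply: (ip_eq0 hH); rewrite -Psa Pid h.
Qed.

Lemma factB k : pP k != 0 -> P (v k) = v k.
Proof.
move=> hk.
have hx : P (v k - P (v k)) = 0 by rewrite PB Pid subrr.
have h1 := ker_fact hk hx.
have h2 : ip (v k - P (v k)) (P (v k)) = 0 by rewrite -Psa hx (ip0l hH).
have : ip (v k - P (v k)) (v k - P (v k)) = 0 by rewrite (ipBr hH) h1 h2 subrr.
by move/(ip_eq0 hH)/eqP; rewrite subr_eq0 eq_sym => /eqP.
Qed.

Lemma core k : P (v k) = pP k *: v k /\
  (v k != 0 -> P (u k) = pP k *: u k /\ (pP k = 0 \/ pP k = 1)).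
Proof.
have [h0|h0] := eqVneq (pP k) 0.
  have hv0 : P (v k) = 0 by apply: factA; rewrite h0 eq_sym oner_neq0.
  rewrite h0 !scale0r hv0; split=> // _.
  split; last by left.
  by apply: (ip_eq0 hH); rewrite -pP_sq h0.
have [h1|h1] := eqVneq (pP k) 1.
  have hv1 : P (v k) = v k by apply: factB; rewrite h1 oner_neq0.
  rewrite h1 !scale1r hv1; split=> // _.
  split; last by right.
  have : ip (u k - P (u k)) (u k - P (u k)) = 0 by rewrite pP_compl h1 subrr.
  by move/(ip_eq0 hH)/eqP; rewrite subr_eq0 eq_sym => /eqP.
have hv0 : v k = 0 by rewrite -(factB h0) (factA h1).
by rewrite hv0 P0 scaler0 eqxx; split.
Qed.

End Proj.
End Main.

Unset Implicit Arguments.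

Theorem proposition3p3 (R : realType) (V : lmodType R[i]) (ip : V -> V -> R[i])
  (hH : separable_inf_hilbert ip) (u v : nat -> V)
  (hu : forall k, ipnorm ip (u k) = 1) (hv : resolves_identity ip v) :
  (forall P : V -> V, orth_proj ip P ->
     (dual_fixed ip u v P <->
      forall k x, P (rank1 ip (u k) (v k) x) = rank1 ip (u k) (v k) (P x)))
  /\ (forall P : V -> V, orth_proj ip P -> dual_fixed ip u v P ->
     forall k, v k != 0 -> eigvec P (u k) /\ eigvec P (v k))
  /\ (forall P Q : V -> V, orth_proj ip P -> orth_proj ip Q ->
     dual_fixed ip u v P -> dual_fixed ip u v Q ->
     forall x, P (Q x) = Q (P x)).
Proof.
split; [|split].
- move=> P hP; split.
  + move=> hf k x.
    have [hv0|hvn] := eqVneq (v k) 0.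
      by rewrite /rank1 hv0 !(ip0r hH) !scale0r (P0 hP).
    have [hPv H] := core hH hu hv hP hf k.
    have [hPu hp] := H hvn.
    rewrite /rank1 (PZ hP) hPu (Psa hP x (v k)) hPv (ipZr hH) scalerA.
    congr (_ *: _).
    by case: hp => ->; rewrite ?conjC0 ?conjC1 mulrC.
  + move=> hc x.
    apply: vconv_ext (hv (P x)) => n.
    apply: eq_bigr => j _.
    by rewrite hc /rank1 (ipZl hH) (uu1 hH hu) mulr1.
- move=> P hP hf k hvk.
  have [hPv H] := core hH hu hv hP hf k.
  have [hPu _] := H hvk.
  split; split => //; last by exists (pP ip u P k).
    apply/eqP => hu0; have := hu k.
    rewrite hu0 /ipnorm (ip0l hH) /= sqrtr0 => /eqP; by rewrite eq_sym oner_eq0.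
  by exists (pP ip u P k).
- move=> P Q hP hQ hfP hfQ x.
  have key : forall w, ip (P (Q x)) w = ip (Q (P x)) w.
    move=> w.
    rewrite (Psa hP (Q x) w) (Psa hQ (P x) w).
    apply: (cconv_uniq (fixed_weak hH hQ hfQ x (P w))).
    apply: cconv_ext (fixed_weak hH hP hfP x (Q w)) => n.
    apply: eq_bigr => j _.
    rewrite -(Psa hP (v j) w) -(Psa hQ (v j) w).
    rewrite (core hH hu hv hP hfP j).1 (core hH hu hv hQ hfQ j).1 !(ipZl hH).
    ring.
  have : ip (P (Q x) - Q (P x)) (P (Q x) - Q (P x)) = 0.
    by rewrite (ipBl hH) key subrr.
  by move/(ip_eq0 hH)/eqP; rewrite subr_eq0 => /eqP.
Qed.
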